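(* Let $G$ be an infinite, connected, locally finite graph, let $S$ be a finite resolving set of $G$, and let $\mathcal P$ be a set of metric rays of $G$ whose vertex sets are pairwise disjoint. For each $P\in\mathcal P$ with ordered vertex set $\{u_0,u_1,\dots\}$, let $u^P$ denote the vertex $u_{i(P,S)}$ of $P$. Then $S$ doubly resolves the set $\{u^P: P\in\mathcal P\}$.
   Context: $d$ denotes shortest-path distance in $G$. A vertex $x$ resolves $u,v$ if $d(u,x)\ne d(v,x)$; $S$ is a resolving set if every pair of distinct vertices is resolved by some vertex of $S$. For a finite ordered set $S=\{x_1,\dots,x_n\}$, $r(u\mid S)=(d(u,x_1),\dots,d(u,x_n))$. A metric ray of $G$ with endpoint $u_0$ is an infinite subgraph $P$ whose vertices admit an ordering $u_0,u_1,u_2,\dots$ (all distinct) with $u_k$ adjacent to $u_{k+1}$ in $P$ and $d_G(u_0,u_k)=k$ for all $k\ge 0$. For a finite set $S$ and a metric ray $P$, $i(P,S)$ is the minimum integer $i_0\ge0$ such that $r(u_{i_0+k}\mid S)=r(u_{i_0}\mid S)+(k,\dots,k)$ for every $k\ge 0$ (such an $i_0$ always exists). Two vertices $x,y$ doubly resolve a pair $u,v$ if $d(u,x)-d(v,x)\ne d(u,y)-d(v,y)$; $S$ doubly resolves a set $U$ if every pair of distinct vertices of $U$ is doubly resolved by some two vertices of $S$. *)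

(* Defs.v *)
From Stdlib Require Import Arith ZArith List ClassicalEpsilon.
Import ListNotations.

Section Graphs.
Context {V : Type} (adj : V -> V -> Prop).

Definition simple_graph : Prop :=
  (forall u v, adj u v -> adj v u) /\ (forall u, ~ adj u u).

Inductive walk : V -> V -> nat -> Prop :=
  | walk_nil : forall u, walk u u 0
  | walk_cons : forall u w v n, adj u w -> walk w v n -> walk u v (S n).

Definition connected : Prop := forall u v, exists n, walk u v n.

Definition locally_finite : Prop :=
  forall v, exists l : list V, forall w, adj v w -> In w l.

Definition infinite_graph : Prop := ~ exists l : list V, forall v, In v l.

(* shortest-path distance (meaningful when G is connected) *)
Definition dist (u v : V) : nat :=
  epsilon (inhabits 0%nat)
    (fun n => walk u v n /\ forall m, walk u v m -> (n <= m)%nat).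

Definition resolving_set (S : list V) : Prop :=
  forall u v, u <> v -> exists x, In x S /\ dist u x <> dist v x.

Definition metric_ray (u : nat -> V) : Prop :=
  (forall k l, u k = u l -> k = l) /\
  (forall k, adj (u k) (u (S k))) /\
  (forall k, dist (u 0%nat) (u k) = k).

Definition ray_stable (S : list V) (u : nat -> V) (i0 : nat) : Prop :=
  forall k x, In x S -> dist (u (i0 + k)%nat) x = (dist (u i0) x + k)%nat.

Definition ray_index (S : list V) (u : nat -> V) : nat :=
  epsilon (inhabits 0%nat)
    (fun i0 => ray_stable S u i0 /\ forall j, ray_stable S u j -> (i0 <= j)%nat).

Definition doubly_resolves_pair (x y u v : V) : Prop :=
  (Z.of_nat (dist u x) - Z.of_nat (dist v x) <>
   Z.of_nat (dist u y) - Z.of_nat (dist v y))%Z.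

Definition doubly_resolves (S : list V) (U : V -> Prop) : Prop :=
  forall u v, U u -> U v -> u <> v ->
    exists x y, In x S /\ In y S /\ doubly_resolves_pair x y u v.

End Graphs.

(* Main.v *)
Require Import Defs.
From Stdlib Require Import Arith ZArith List Lia Classical ClassicalEpsilon.

Lemma nat_min (P : nat -> Prop) : (exists n, P n) -> exists n, P n /\ forall m, P m -> n <= m.
Proof.
  intros [n Hn]. revert Hn.
  induction n as [n IH] using (well_founded_induction lt_wf). intros Hn.
  destruct (classic (exists m, P m /\ m < n)) as [[m [Pm Hm]]|H].
  - exact (IH m Hm Pm).
  - exists n. split; auto. intros m Pm. destruct (le_lt_dec n m); auto.
    exfalso; apply H; eauto.
Qed.

Section L.
Context {V : Type} (adj : V -> V -> Prop).
Hypothesis sym : forall u v, adj u v -> adj v u.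
Hypothesis conn : connected adj.

Lemma walk_app u v n : walk adj u v n -> forall w m, walk adj v w m -> walk adj u w (n+m).
Proof. induction 1; intros; simpl; [assumption| econstructor; eauto]. Qed.

Lemma walk_rev u v n : walk adj u v n -> walk adj v u n.
Proof.
  induction 1. constructor.
  replace (S n) with (n+1) by lia. apply walk_app with w; auto.
  econstructor; [apply sym; eauto | constructor].
Qed.

Lemma dist_spec u v : walk adj u v (dist adj u v) /\ forall m, walk adj u v m -> dist adj u v <= m.
Proof. unfold dist. apply epsilon_spec. apply nat_min. apply conn. Qed.

Lemma dist_le u v m : walk adj u v m -> dist adj u v <= m.
Proof. apply dist_spec. Qed.

Lemma dist_tri u v w : dist adj u w <= dist adj u v + dist adj v w.
Proof. apply dist_le. apply walk_app with v; apply dist_spec. Qed.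

Lemma dist_sym u v : dist adj u v = dist adj v u.
Proof.
  apply Nat.le_antisymm; apply dist_le; apply walk_rev; apply dist_spec.
Qed.

Lemma dist_adj u v : adj u v -> dist adj u v <= 1.
Proof. intros H. apply dist_le. econstructor; [eauto|constructor]. Qed.

Section Ray.
Variable u : nat -> V.
Hypothesis Hr : metric_ray adj u.

Lemma g_step x k : dist adj (u (S k)) x <= dist adj (u k) x + 1.
Proof.
  destruct Hr as [_ [Ha _]].
  pose proof (dist_tri (u (S k)) (u k) x).
  pose proof (dist_adj _ _ (sym _ _ (Ha k))). lia.
Qed.

Lemma g_low x k : k <= dist adj (u 0) x + dist adj (u k) x.
Proof.
  destruct Hr as [_ [_ Hd]].
  pose proof (dist_tri (u 0) x (u k)). rewrite Hd in H.
  rewrite (dist_sym x (u k)) in H. lia.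
Qed.

Lemma g_mono x K k : dist adj (u (K+k)) x <= dist adj (u K) x + k.
Proof.
  induction k. rewrite Nat.add_0_r; lia.
  rewrite Nat.add_succ_r. pose proof (g_step x (K+k)). lia.
Qed.

Lemma single_stable x : exists K, forall k, dist adj (u (K+k)) x = dist adj (u K) x + k.
Proof.
  set (D := dist adj (u 0) x).
  assert (H: forall m K, D + dist adj (u K) x - K <= m ->
     exists K', forall k, dist adj (u (K'+k)) x = dist adj (u K') x + k).
  { induction m as [m IH] using (well_founded_induction lt_wf). intros K HK.
    destruct (classic (forall k, dist adj (u (K+k)) x = dist adj (u K) x + k)) as [H|H]; [eauto|].
    apply not_all_ex_not in H. destruct H as [k Hk].
    apply (IH (D + dist adj (u (K+k)) x - (K+k))) with (K := K+k); [|lia].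
    pose proof (g_mono x K k). pose proof (g_low x (K+k)). pose proof (g_low x K).
    unfold D in *. lia. }
  apply (H _ 0 (le_n _)).
Qed.

Lemma stable_shift x K j : (forall k, dist adj (u (K+k)) x = dist adj (u K) x + k) ->
  forall k, dist adj (u (K+j+k)) x = dist adj (u (K+j)) x + k.
Proof.
  intros H k. rewrite <- Nat.add_assoc. rewrite !H. lia.
Qed.

Lemma list_stable S : exists K, ray_stable adj S u K.
Proof.
  induction S as [|a S IH]. exists 0; intros k x [].
  destruct IH as [K1 H1]; destruct (single_stable a) as [K2 H2].
  exists (K1+K2). intros k x [<-|Hx].
  - rewrite (Nat.add_comm K1 K2). apply stable_shift; auto.
  - apply stable_shift. intros k'; apply H1; auto.
Qed.

Lemma ray_index_stable S : ray_stable adj S u (ray_index adj S u).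
Proof.
  unfold ray_index. apply (proj1 (epsilon_spec _ _ (nat_min _ (list_stable S)))).
Qed.
End Ray.
End L.

Theorem lemma6 (V : Type) (adj : V -> V -> Prop)
  (Hsimple : simple_graph adj) (Hinf : infinite_graph (V:=V))
  (Hconn : connected adj) (Hlf : locally_finite adj)
  (S : list V) (HS : resolving_set adj S)
  (I : Type) (ray : I -> nat -> V)
  (Hray : forall i, metric_ray adj (ray i))
  (Hdisj : forall i j, i <> j -> forall k l, ray i k <> ray j l) :
  doubly_resolves adj S
    (fun w => exists i, w = ray i (ray_index adj S (ray i))).
Proof.
  intros a b [i ->] [j ->] Hab.
  destruct Hsimple as [sym _].
  apply NNPP; intro Hno.
  pose proof (ray_index_stable adj sym Hconn (ray i) (Hray i) S) as Hsi.
  pose proof (ray_index_stable adj sym Hconn (ray j) (Hray j) S) as Hsj.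
  unfold ray_stable in Hsi, Hsj.
  destruct (HS _ _ Hab) as [x0 [Hx0 _]].
  assert (Hij : i <> j) by (intro; subst; apply Hab; reflexivity).
  revert Hab Hno Hsi Hsj.
  generalize (ray_index adj S (ray i)) as ia.
  generalize (ray_index adj S (ray j)) as ib.
  intros ib ia Hab Hno Hsi Hsj.
  assert (Heq: forall x, In x S ->
    (Z.of_nat (dist adj (ray i ia) x) - Z.of_nat (dist adj (ray j ib) x) =
     Z.of_nat (dist adj (ray i ia) x0) - Z.of_nat (dist adj (ray j ib) x0))%Z).
  { intros x Hx. apply NNPP; intro Hne. apply Hno. exists x, x0.
    unfold doubly_resolves_pair; auto. }
  destruct (le_lt_dec (dist adj (ray j ib) x0) (dist adj (ray i ia) x0)) as [Hl|Hl].
  - set (n := dist adj (ray i ia) x0 - dist adj (ray j ib) x0).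
    assert (E : ray i ia = ray j (ib + n)).
    { apply NNPP; intro Hne. destruct (HS _ _ Hne) as [x [Hx Hd]].
      apply Hd. rewrite Hsj by auto. pose proof (Heq x Hx). unfold n. lia. }
    exact (Hdisj _ _ Hij _ _ E).
  - set (n := dist adj (ray j ib) x0 - dist adj (ray i ia) x0).
    assert (E : ray j ib = ray i (ia + n)).
    { apply NNPP; intro Hne. destruct (HS _ _ Hne) as [x [Hx Hd]].
      apply Hd. rewrite Hsi by auto. pose proof (Heq x Hx). unfold n. lia. }
    exact (Hdisj _ _ (not_eq_sym Hij) _ _ E).
Qed.
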